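(* Let $p$ be an even integer, $q\ge1$, $W\ge q$, and $a=1-1/W$. Consider the following random $p\times q$ matrix $A$: for each $i\in[p/2]$ choose $j\in[q]$ uniformly at random and set $A_{i+p/2}=A_i=ae_j+b(\mathbf{1}_q-e_j)$, where $b\ge 0$ is chosen so that $\|A_i\|_2=1$ (a YES instance). With probability $1/2$, transform $A$ into a NO instance: choose $i^*\in[p/2]$ uniformly at random and, if $A_{i^*}=ae_{j^*}+b(\mathbf{1}_q-e_{j^*})$, set $A_{i^*+p/2}=-ae_{j^*}+b(\mathbf{1}_q-e_{j^*})$. If a deterministic algorithm reads at most $s$ positions of $A$ and distinguishes YES and NO instances with probability at least $2/3$ (over this distribution), then $s=\Omega(pq)$.
   Context: $e_j$ is the $j$-th standard unit vector in $\mathbb{R}^q$, $\mathbf{1}_q$ the all-ones vector. *)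

(* Defs.v *)
From HB Require Import structures.
From mathcomp Require Import all_boot all_order all_algebra.
From mathcomp Require Import reals.
Set Implicit Arguments. Unset Strict Implicit. Unset Printing Implicit Defensive.
Import Order.TTheory GRing.Theory Num.Theory.
Local Open Scope ring_scope.

Section Defs.
Variable R : realType.

(* A deterministic adaptive query algorithm on p x q real matrices:
   a decision tree whose internal nodes read one entry (i,j) and branch
   on its (real) value, and whose leaves output a bit
   (true = "YES instance", false = "NO instance"). *)
Inductive dtree (p q : nat) : Type :=
| Leaf of bool
| Query of 'I_p & 'I_q & (R -> dtree p q).

Fixpoint run p q (t : dtree p q) (A : 'M[R]_(p, q)) : bool :=
  match t with
  | Leaf b => b
  | Query i j k => run (k (A i j)) A
  end.

Inductive depth_le p q : nat -> dtree p q -> Prop :=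
| depth_leaf s b : depth_le s (Leaf p q b)
| depth_query s i j k : (forall x, depth_le s (k x)) ->
    depth_le s.+1 (Query i j k).

Definition a_of (W : R) : R := 1 - W^-1.
(* b >= 0 with a^2 + (q-1) b^2 = 1 (for q = 1 this is 0). *)
Definition b_of (q : nat) (W : R) : R :=
  Num.sqrt ((1 - a_of W ^+ 2) / (q.-1)%:R).

Definition half_mx m q (W : R) (J : {ffun 'I_m -> 'I_q}) : 'M[R]_(m, q) :=
  \matrix_(i, k) (if k == J i then a_of W else b_of q W).

Definition yes_mx m q W (J : {ffun 'I_m -> 'I_q}) : 'M[R]_(m + m, q) :=
  col_mx (half_mx W J) (half_mx W J).

Definition no_mx m q W (J : {ffun 'I_m -> 'I_q}) (istar : 'I_m)
  : 'M[R]_(m + m, q) :=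
  col_mx (half_mx W J)
    (\matrix_(i, k) (if (i == istar) && (k == J i) then - a_of W
                     else half_mx W J i k)).

(* Probability (over the distribution of the statement) that t answers
   correctly: YES/NO each with probability 1/2, J uniform in [q]^[m],
   istar uniform in [m]. *)
Definition success_prob m q W (t : dtree (m + m) q) : R :=
  2^-1 * ((q ^ m)%:R^-1 *
          \sum_(J : {ffun 'I_m -> 'I_q}) (run t (yes_mx W J) == true)%:R)
  + 2^-1 * (((m * q ^ m)%:R)^-1 *
          \sum_(J : {ffun 'I_m -> 'I_q}) \sum_(istar : 'I_m)
             (run t (no_mx W J istar) == false)%:R).

End Defs.

(* Main.v *)
Require Import Defs.
From HB Require Import structures.
From mathcomp Require Import all_boot all_order all_algebra.
From mathcomp Require Import reals.
From mathcomp Require Import zify ring lra.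
Set Implicit Arguments. Unset Strict Implicit. Unset Printing Implicit Defensive.
Import Order.TTheory GRing.Theory Num.Theory.

Section Aux.
Variable R : realType.

Fixpoint qs p q (t : dtree R p q) (A : 'M[R]_(p, q)) : seq ('I_p * 'I_q) :=
  match t with
  | Leaf _ => [::]
  | Query i j k => (i, j) :: qs (k (A i j)) A
  end.

Lemma run_agree p q (t : dtree R p q) (A B : 'M[R]_(p, q)) :
  (forall x, x \in qs t A -> A x.1 x.2 = B x.1 x.2) -> run t A = run t B.
Proof.
elim: t => [b|i j k IH] //= H.
rewrite -(H (i, j)) ?mem_head //; apply: IH => x Hx; apply: H.
by rewrite in_cons Hx orbT.
Qed.

Lemma size_qs p q s (t : dtree R p q) A : depth_le s t -> (size (qs t A) <= s)%N.
Proof. by elim => //= s' i j k _ IH; rewrite ltnS. Qed.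

Section Fam.
Variables (p q : nat) (Rw : pred 'I_p) (A : 'I_q -> 'M[R]_(p, q)) (M0 : 'M[R]_(p, q)).
Hypothesis HA : forall j r c, ~~ (Rw r && (c == j)) -> A j r c = M0 r c.

Definition gg (t : dtree R p q) j : bool := has (fun x => Rw x.1 && (x.2 == j)) (qs t (A j)).
Definition nn (t : dtree R p q) j : nat := count (fun x => Rw x.1) (qs t (A j)).

Lemma sum_b_le (P : pred 'I_q) (F : 'I_q -> bool) : (\sum_(j | P j) F j <= #|P|)%N.
Proof.
rewrite -sum1_card; apply: leq_sum => j _; by case: (F j).
Qed.

Lemma fam (t : dtree R p q) (P : pred 'I_q) :
  ((\sum_(j | P j) gg t j) * #|P| <= 2 * \sum_(j | P j) nn t j)%N.
Proof.
elim: t P => [b|r c k IH] P.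
  by rewrite big1.
rewrite /gg /nn /=.
case Hr: (Rw r) => /=.
  case Pc: (P c).
  - rewrite (bigD1 c) //= (bigD1 c (P:=fun j => P j)) //= eqxx /=.
    set P' := [pred j | P j && (j != c)].
    have HP : #|P| = (#|P'|).+1.
      rewrite (cardD1 c) (_ : c \in P = true) // add1n; congr _.+1.
      by apply: eq_card => x; rewrite !inE /= andbC.
    have E1 : \sum_(i | P i && (i != c)) ((c == i) || has (fun x => Rw x.1 && (x.2 == i)) (qs (k (A i r c)) (A i)))
      = \sum_(i | P' i) gg (k (M0 r c)) i.
      apply: eq_bigr => j /andP [_ Hj].
      rewrite HA; last by rewrite Hr /= eq_sym.
      by rewrite eq_sym (negbTE Hj).
    have E2 : \sum_(i | P i && (i != c)) (1 + count (fun x => Rw x.1) (qs (k (A i r c)) (A i)))%N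
      = (#|P'| + \sum_(i | P' i) nn (k (M0 r c)) i)%N.
      rewrite big_split /=; congr (_ + _)%N.
        by rewrite -sum1_card; apply: eq_bigl => x; rewrite !inE.
      apply: eq_bigr => j /andP [_ Hj].
      by rewrite HA // Hr /= eq_sym.
    rewrite /= in E1 E2.
    rewrite E1 E2 HP.
    have := IH (M0 r c) P'.
    have := sum_b_le P' (gg (k (M0 r c))).
    set G := (\sum_(i | P' i) _)%N.
    set S := (\sum_(i | P' i) _)%N.
    set d := #|P'|.
    set n := count _ _.
    nia.
  - have E1 : \sum_(i | P i) ((c == i) || has (fun x => Rw x.1 && (x.2 == i)) (qs (k (A i r c)) (A i)))
      = \sum_(i | P i) gg (k (M0 r c)) i.
      apply: eq_bigr => j Pj.
      have Hj : (c == j) = false by apply/negbTE; apply/eqP => E; rewrite E Pj in Pc.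
      by rewrite HA ?Hr ?Hj.
    have E2 : \sum_(i | P i) (1 + count (fun x => Rw x.1) (qs (k (A i r c)) (A i)))
      = #|P| + \sum_(i | P i) nn (k (M0 r c)) i.
      rewrite big_split /=; congr (_ + _).
        by rewrite -sum1_card.
      apply: eq_bigr => j Pj.
      have Hj : (c == j) = false by apply/negbTE; apply/eqP => E; rewrite E Pj in Pc.
      by rewrite HA ?Hr ?Hj.
    rewrite E1 E2.
    have := IH (M0 r c) P.
    have := sum_b_le P (gg (k (M0 r c))).
    nia.
have E1 : \sum_(i | P i) has (fun x => Rw x.1 && (x.2 == i)) (qs (k (A i r c)) (A i))
      = \sum_(i | P i) gg (k (M0 r c)) i.
  by apply: eq_bigr => j Pj; rewrite HA ?Hr.
have E2 : \sum_(i | P i) (0 + count (fun x => Rw x.1) (qs (k (A i r c)) (A i)))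
      = \sum_(i | P i) nn (k (M0 r c)) i.
  by apply: eq_bigr => j Pj; rewrite HA ?Hr.
rewrite E1 E2; exact: IH.
Qed.
End Fam.
End Aux.

Definition rowidx m (r : 'I_(m + m)) : 'I_m :=
  match split r with inl x => x | inr x => x end.

Lemma rowidx_l m (i : 'I_m) : rowidx (lshift m i) = i.
Proof. by rewrite /rowidx (unsplitK (inl _ i)). Qed.
Lemma rowidx_r m (i : 'I_m) : rowidx (rshift m i) = i.
Proof. by rewrite /rowidx (unsplitK (inr _ i)). Qed.

Definition upd m n (J : {ffun 'I_m -> 'I_n}) i j : {ffun 'I_m -> 'I_n} :=
  [ffun k => if k == i then j else J k].

Lemma reindex_upd m n (i : 'I_m) (F : {ffun 'I_m -> 'I_n.+1} -> nat) :
  \sum_J \sum_j F (upd J i j) = n.+1 * \sum_J F J.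
Proof.
have E1 : forall J, \sum_j F (upd J i j) = \sum_j F (upd J i (j + J i)%R).
  move=> J; apply: (reindex_inj (h := fun j => (j + J i)%R)).
  exact: GRing.addIr.
rewrite (eq_bigr _ (fun J _ => E1 J)) exchange_big /=.
rewrite (eq_bigr (fun _ => \sum_J F J)); last first.
  move=> j _; apply/esym.
  apply: (reindex_inj (h := fun J => upd J i (j + J i)%R)).
  move=> J1 J2 E; apply/ffunP => k.
  have := congr1 (fun f : {ffun _ -> _} => f k) E; rewrite !ffunE.
  case: eqP => [->|//]; exact: GRing.addrI.
by rewrite sum_nat_const card_ord.
Qed.

Lemma sum_nrow m n (l : seq ('I_(m + m) * 'I_n)) :
  \sum_(i < m) count (fun x => rowidx x.1 == i) l = size l.
Proof.
elim: l => [|x l IH] /=; first by rewrite big1.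
rewrite big_split /= IH -add1n; congr (_ + _).
rewrite (bigD1 (rowidx x.1)) //= eqxx big1 // => j /negbTE.
by rewrite eq_sym => ->.
Qed.

Section Main.
Variables (R : realType) (m q' : nat) (W : R).
Local Notation q := q'.+1.
Variable t : dtree R (m + m) q.

Lemma yesE (J : {ffun 'I_m -> 'I_q}) r c : yes_mx W J r c = half_mx W J (rowidx r) c.
Proof.
by case: (split_ordP r) => r0 ->; rewrite ?col_mxEu ?col_mxEd ?rowidx_l ?rowidx_r.
Qed.

Lemma noE (J : {ffun 'I_m -> 'I_q}) i r c :
  (r, c) != (rshift m i, J i) -> no_mx W J i r c = yes_mx W J r c.
Proof.
case: (split_ordP r) => r0 -> H; rewrite ?col_mxEu ?col_mxEd //.
rewrite mxE; case: eqP => [E|//] /=; case: eqP => [E'|//].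
by move: H; rewrite E' E eqxx.
Qed.

Definition hit (J : {ffun 'I_m -> 'I_q}) i : bool :=
  (rshift m i, J i) \in qs t (yes_mx W J).

Definition nrow (i : 'I_m) (l : seq ('I_(m + m) * 'I_q)) :=
  count (fun x => rowidx x.1 == i) l.

Lemma step1 J i :
  (run t (no_mx W J i) == false) <= (run t (yes_mx W J) == false) + hit J i.
Proof.
case Hh: (hit J i); first by case: (run t (no_mx W J i) == false); case: (run t (yes_mx W J) == false).
rewrite addn0 (@run_agree _ _ _ t (yes_mx W J) (no_mx W J i)) //.
move=> [r c] Hx /=; rewrite noE //.
by apply: contraTneq Hx => E; rewrite /hit -E in Hh; rewrite Hh.
Qed.

Lemma per_i i J0 :
  (\sum_j hit (upd J0 i j) i) * q <= 2 * \sum_j nrow i (qs t (yes_mx W (upd J0 i j))).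
Proof.
pose M0 : 'M[R]_(m + m, q) :=
  (\matrix_(r, c) (if rowidx r == i then b_of q W else yes_mx W J0 r c))%R.
have HA : forall j r c, ~~ ((rowidx r == i) && (c == j)) ->
    yes_mx W (upd J0 i j) r c = M0 r c.
  move=> j r c H; rewrite yesE [M0 r c]mxE yesE /half_mx !mxE !ffunE.
  case: (rowidx r == i) H => //= H; by rewrite (negbTE H).
have := fam HA t predT.
rewrite card_ord => H; apply: leq_trans H.
rewrite leq_mul2r; apply/orP; right.
apply: leq_sum => j _; rewrite /gg.
case Hh: (hit _ _) => //=.
rewrite lt0b; apply/hasP; exists (rshift m i, j) => /=.
  by move: Hh; rewrite /hit ffunE eqxx.
by rewrite rowidx_r !eqxx.
Qed.

Lemma hits_bound s : depth_le s t ->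
  q * \sum_J \sum_i hit J i <= 2 * (q ^ m * s).
Proof.
move=> Hd.
rewrite exchange_big big_distrr /=.
apply: (@leq_trans (\sum_i 2 * \sum_J nrow i (qs t (yes_mx W J)))).
  apply: leq_sum => i _.
  have H : \sum_J0 ((\sum_j hit (upd J0 i j) i) * q) <=
           \sum_J0 (2 * \sum_j nrow i (qs t (yes_mx W (upd J0 i j)))).
    by apply: leq_sum => J0 _; apply: per_i.
  rewrite -big_distrl -big_distrr /= in H.
  rewrite (reindex_upd i (fun J => hit J i)) in H.
  rewrite (reindex_upd i (fun J => nrow i (qs t (yes_mx W J)))) in H.
  rewrite -(leq_pmul2l (ltn0Sn q')); move: H; set X := \sum_J _; set Y := \sum_J _; nia.
rewrite -big_distrr leq_pmul2l // exchange_big /=.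
apply: (@leq_trans (\sum_(J : {ffun 'I_m -> 'I_q}) s)).
  apply: leq_sum => J _; rewrite /nrow sum_nrow; exact: size_qs.
by rewrite sum_nat_const card_ffun !card_ord.
Qed.

End Main.

Lemma nat_core (R : realType) (m q' : nat) (W : R) (s : nat) (t : dtree R (m + m) q'.+1) :
  (0 < m)%N -> depth_le s t ->
  (4 * m * q'.+1 ^ m <=
     3 * m * (\sum_J (run t (yes_mx W J) == true)) +
     3 * (\sum_J \sum_i (run t (no_mx W J i) == false)))%N ->
  (m * q'.+1 <= 6 * s)%N.
Proof.
move=> Hm Hd H.
set N := (q'.+1 ^ m)%N in H.
have HN : (0 < N)%N by rewrite expn_gt0.
set Yn := (\sum_J _)%N in H.
set Zn := (\sum_J _)%N in H.
set Hs := (\sum_J \sum_i hit W t J i)%N.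
have F2 : (q'.+1 * Hs <= 2 * (N * s))%N by apply: hits_bound.
have F1 : (Zn + m * Yn <= m * N + Hs)%N.
  have -> : N = #|{ffun 'I_m -> 'I_q'.+1}| by rewrite card_ffun !card_ord.
  rewrite /Zn /Yn /Hs big_distrr -big_split /=.
  rewrite -sum1_card big_distrr -big_split /=.
  apply: leq_sum => J _.
  have S1 : (\sum_i (run t (no_mx W J i) == false) <=
      \sum_i ((run t (yes_mx W J) == false) + hit W t J i))%N.
    by apply: leq_sum => i _; exact: step1.
  rewrite big_split /= sum_nat_const card_ord in S1.
  move: S1; case: (run t (yes_mx W J)) => /= S1; lia.
nia.
Qed.

Local Open Scope ring_scope.

Theorem mainTheorem12 (R : realType) :
  exists c : R, 0 < c /\
  forall (m q : nat) (W : R) (s : nat) (t : dtree R (m + m) q),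
    (0 < m)%N -> (1 <= q)%N -> q%:R <= W ->
    depth_le s t ->
    2 / 3 <= success_prob W t ->
    c * ((m + m) * q)%:R <= s%:R.
Proof.
exists (1 / 12); split; first lra.
move=> m [//|q'] W s t Hm _ _ Hd Hs.
have Hc := nat_core (W:=W) Hm Hd.
suff H : (m * q'.+1 <= 6 * s)%N.
  have : ((m + m) * q'.+1)%:R <= 12 * (s%:R : R).
    rewrite -(natrM R 12) ler_nat; lia.
  lra.
apply: Hc.
rewrite -(ler_nat R).
move: Hs; rewrite /success_prob -!natr_sum.
under [X in _ <= _ + _ * (_ * X)]eq_bigr do rewrite -natr_sum.
rewrite -natr_sum.
set Y := (\sum_J _)%N; set Z := (\sum_J _)%N.
rewrite !natrD !natrM.
have n0 : 0 < ((q'.+1 ^ m)%N%:R : R) by rewrite ltr0n expn_gt0.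
have m0 : 0 < (m%:R : R) by rewrite ltr0n.
set n := ((q'.+1 ^ m)%N%:R : R) in n0 *.
set mr := (m%:R : R) in m0 *.
have E : 2^-1 * (n^-1 * Y%:R) + 2^-1 * ((mr * n)^-1 * Z%:R)
    = (3 * mr * Y%:R + 3 * Z%:R) / (6 * mr * n).
  field; apply/andP; split; apply/lt0r_neq0 => //.
rewrite E ler_pdivlMr; last by rewrite !mulr_gt0.
have -> : 2 / 3 * (6 * mr * n) = 4 * mr * n by field.
move=> H; apply: le_trans H _; lra.
Qed.
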